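(* Let $\mathbf b\in\mathcal B$ and $u\in M$ with $u-\mathbf b\in\mathbb Z A_+$, and write $\mathbf b=\sum_{j=1}^mv_j\mathbf a_j$ with $v_j\in[0,1)$. Let $s_0\in\{0,1,\dots,\ell_0-1\}$ be the unique element with $u+s_0\mathbf a_0\equiv\mathbf b\pmod{\mathbb ZA}$ and let $s_1,\dots,s_m\in\mathbb Z$ be the unique integers with $u+s_0\mathbf a_0=\mathbf b-\sum_{j=1}^ms_j\mathbf a_j$. Then \[G^{(\mathbf b)}_u(\lambda)=\Big(\prod_{j=1}^m[-v_j]_{s_j}\prod_{j=1}^m\ell_j^{s_j}\Big)\frac{(-\ell_0)^{s_0}}{s_0!}F^{(\mathbf b)}_u(\lambda),\] where \[F^{(\mathbf b)}_u(\lambda)=\lambda^{s_0}\sum_{s=0}^\infty\frac{\prod_{j=1}^m\prod_{\sigma=0}^{\ell_j-1}\big(\frac{v_j-s_j+\sigma}{\ell_j}\big)_s}{\prod_{t=1}^{\ell_0}\big(\frac{s_0+t}{\ell_0}\big)_s}\lambda^{s\ell_0}.\]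
   Context: Let $A=\{\mathbf a_1,\dots,\mathbf a_m\}\subseteq\mathbb Z^n$ be linearly independent over $\mathbb R$, $\mathbf a_0\in\mathbb Z^n$, and $\ell_0,\ell_1,\dots,\ell_m$ positive integers with gcd $1$ such that $\ell_0\mathbf a_0=\sum_{j=1}^m\ell_j\mathbf a_j$ and $\ell_0=\sum_{j=1}^m\ell_j$. Put $A_+=A\cup\{\mathbf a_0\}$; $\mathbb ZA$ and $\mathbb ZA_+$ denote the subgroups of $\mathbb Z^n$ generated by $A$, $A_+$. Let $V$ be the real span of $A$, $V_{\mathbb Z}=V\cap\mathbb Z^n$, $C(A)$ the closed real cone generated by $A$, $M=V_{\mathbb Z}\cap C(A)$. Let $P(A)=\{\sum_jc_j\mathbf a_j:0\le c_j<1\}$ and $\mathcal B=V_{\mathbb Z}\cap P(A)$. Pochhammer symbol: $(a)_s=a(a+1)\cdots(a+s-1)$, $(a)_0=1$. For $z\in\mathbb C$, $l\in\mathbb Z$: $[z]_0=1$, $[z]_l=1/((z+1)\cdots(z+l))$ for $l>0$, $[z]_l=z(z-1)\cdots(z+l+1)$ for $l<0$. For $\mathbf b=\sum_jv_j\mathbf a_j\in\mathcal B$ ($v_j\in[0,1)$) and $u\in M$, let $g^{(\mathbf b)}_u=\prod_{j=1}^m[-v_j]_{s_j}\ell_j^{s_j}$ if $u=\sum_j(v_j-s_j)\mathbf a_j$ with all $s_j\in\mathbb Z_{\le0}$, and $g^{(\mathbf b)}_u=0$ otherwise; and $G^{(\mathbf b)}_u(\lambda)=\sum_{s\ge0}g^{(\mathbf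 b)}_{u+s\mathbf a_0}\frac{(-\ell_0\lambda)^s}{s!}\in\mathbb C[[\lambda]]$. *)

(* Defs.v *)
From HB Require Import structures.
From mathcomp Require Import all_boot all_order all_algebra.
From mathcomp Require Import boolp reals.
Set Implicit Arguments. Unset Strict Implicit. Unset Printing Implicit Defensive.
Import Order.TTheory GRing.Theory Num.Theory.
Local Open Scope ring_scope.

Section Defs.
Variable R : realType.

(* Formal power series over R, represented by their coefficient sequences:
   f : fps  stands for  \sum_k f k * lambda^k. *)
Definition fps := nat -> R.

Definition poch (a : R) (s : nat) : R := \prod_(i < s) (a + i%:R).

(* [z]_l : [z]_0 = 1, [z]_l = 1/((z+1)...(z+l)) for l > 0,
   [z]_l = z(z-1)...(z+l+1) for l < 0 (Negz k = -(k+1)). *)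
Definition bracket (z : R) (l : int) : R :=
  match l with
  | Posz k => (\prod_(i < k) (z + i.+1%:R))^-1
  | Negz k => \prod_(i < k.+1) (z - i%:R)
  end.

Definition rvec n (x : 'rV[int]_n) : 'rV[R]_n := map_mx (fun z : int => z%:~R) x.

(* g^(b)_w, where b = \sum_j v_j a_j : if w = \sum_j (v_j - t_j) a_j with all
   t_j in Z_{<=0} then \prod_j [-v_j]_{t_j} l_j^{t_j}, else 0.  (By linear
   independence of A such t is unique; it is picked by choice.) *)
Definition gcoef n m (a : 'I_m -> 'rV[int]_n) (l : 'I_m -> nat)
    (v : 'I_m -> R) (w : 'rV[int]_n) : R :=
  match pselect (exists t : 'I_m -> int, (forall j, t j <= 0) /\
            rvec w = \sum_(j < m) (v j - (t j)%:~R) *: rvec (a j)) with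
  | left H => let t := projT1 (cid H) in
              \prod_(j < m) (bracket (- v j) (t j) * (l j)%:R ^ (t j))
  | right _ => 0
  end.

Definition Gser n m (a0 : 'rV[int]_n) (a : 'I_m -> 'rV[int]_n) (l0 : nat)
    (l : 'I_m -> nat) (v : 'I_m -> R) (u : 'rV[int]_n) : fps :=
  fun s => gcoef a l v (u + a0 *+ s) * (- l0%:R) ^+ s / s`!%:R.

(* F^(b)_u(lambda) = lambda^{s0} \sum_s c_s lambda^{s l0} with
   c_s = \prod_j \prod_{sigma<l_j} ((v_j - s_j + sigma)/l_j)_s
         / \prod_{t=1}^{l0} ((s0+t)/l0)_s ;
   its coefficient of lambda^k is c_((k-s0)/l0) if k = s0 + s l0, else 0. *)
Definition Fser m (l0 : nat) (l : 'I_m -> nat) (v : 'I_m -> R)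
    (s0 : nat) (s : 'I_m -> int) : fps :=
  fun k =>
    if (s0 <= k)%N && (l0 %| k - s0)%N then
      let e := ((k - s0) %/ l0)%N in
      (\prod_(j < m) \prod_(sigma < l j)
          poch ((v j - (s j)%:~R + sigma%:R) / (l j)%:R) e)
      / \prod_(t < l0) poch ((s0 + t.+1)%:R / l0%:R) e
    else 0.

End Defs.

(* Main.v *)
Require Import Defs.
From HB Require Import structures.
From mathcomp Require Import all_boot all_order all_algebra.
From mathcomp Require Import boolp reals.
From mathcomp Require Import ring lra zify.
Import Order.TTheory GRing.Theory Num.Theory.
Local Open Scope ring_scope.
Lemma li (R : realType) n m (V : 'I_m -> 'rV[R]_n)
  (Hfree : free [seq V j | j <- enum 'I_m]) (c : 'I_m -> R) :
  \sum_(j < m) c j *: V j = 0 -> forall j, c j = 0.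
Proof.
move: Hfree.
have -> : [seq V j | j <- enum 'I_m] = val [tuple V j | j < m].
  by rewrite /= enumT unlock.
move/freeP => H E j.
apply: (H c) => //.
transitivity (\sum_(j<m) c j *: V j) => //; apply: eq_bigr => i _.
by rewrite -tnth_nth tnth_mktuple.
Qed.

Lemma li2 (R : realType) n m (V : 'I_m -> 'rV[R]_n)
  (Hfree : free [seq V j | j <- enum 'I_m]) (c d : 'I_m -> R) :
  \sum_(j < m) c j *: V j = \sum_(j < m) d j *: V j -> forall j, c j = d j.
Proof.
move=> E j; apply/eqP; rewrite -subr_eq0; apply/eqP; move: j; apply: (@li R n m V Hfree (fun j => c j - d j)).
by rewrite -[RHS](subrr (\sum_(j < m) d j *: V j)) -{1}E -sumrB; apply: eq_bigr => i _; rewrite scalerBl.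
Qed.

Section R.
Variable R : realType.
Implicit Types x z : R.
Lemma rvecD n (x y : 'rV[int]_n) : rvec R (x + y) = rvec R x + rvec R y.
Proof. by apply/matrixP => i j; rewrite !mxE intrD. Qed.
Lemma rvecB n (x y : 'rV[int]_n) : rvec R (x - y) = rvec R x - rvec R y.
Proof. by apply/matrixP => i j; rewrite !mxE intrB. Qed.
Lemma rvecMn n (x : 'rV[int]_n) k : rvec R (x *+ k) = k%:R *: rvec R x.
Proof. by apply/matrixP => i j; rewrite !mxE mulmxnE raddfMn mulr_natl. Qed.
Lemma rvecMz n (x : 'rV[int]_n) k : rvec R (x *~ k) = k%:~R *: rvec R x.
Proof. by apply/matrixP => i j; rewrite -scaler_int !mxE intz intrM. Qed.
Lemma rvec_sum n m (F : 'I_m -> 'rV[int]_n) : rvec R (\sum_(j < m) F j) = \sum_(j < m) rvec R (F j).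
Proof. by apply/matrixP => i j; rewrite !mxE !summxE rmorph_sum /=; apply: eq_bigr => k _; rewrite mxE. Qed.
Lemma br_neg z (N : nat) : bracket z (- (N%:Z)) = \prod_(i < N) (z - i%:R).
Proof. case: N => [|N]; first by rewrite /bracket /= !big_ord0 invr1. by rewrite -NegzE. Qed.

Lemma prodNpoch x K : \prod_(i < K) (- x - i%:R) = (-1) ^+ K * poch x K.
Proof.
rewrite /poch -[in (-1) ^+ K](card_ord K) -prodrN; apply: eq_bigr => i _.
by rewrite opprD.
Qed.

Lemma poch_split x N K : poch x (N + K) = poch x N * poch (x + N%:R) K.
Proof.
rewrite /poch big_split_ord /=; congr (_ * _); apply: eq_bigr => i _.
by rewrite /= natrD addrA.
Qed.

Lemma poch_mul x e l : (0 < l)%N ->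
  poch x (e * l) = l%:R ^+ (e * l) * \prod_(s < l) poch ((x + s%:R) / l%:R) e.
Proof.
move=> lp; have l0 : l%:R != 0 :> R by rewrite pnatr_eq0 -lt0n.
elim: e => [|e IH].
  by rewrite mul0n /poch big_ord0 expr0 mul1r big1 // => i _; rewrite big_ord0.
rewrite mulSnr poch_split IH exprD.
have -> : \prod_(s < l) poch ((x + s%:R) / l%:R) e.+1 =
   \prod_(s < l) poch ((x + s%:R) / l%:R) e * \prod_(s < l) ((x + s%:R) / l%:R + e%:R).
  by rewrite -big_split /=; apply: eq_bigr => i _; rewrite /poch big_ord_recr.
rewrite -!mulrA; congr (_ * _); rewrite [in RHS]mulrCA; congr (_ * _).
rewrite -[in X in l%:R ^+ X](card_ord l) -prodr_const -big_split /=.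
apply: eq_bigr => i _; by rewrite natrM; field.
Qed.

Lemma fact_split s0 K : ((s0 + K)`!)%:R = (s0`!)%:R * poch (s0.+1)%:R K :> R.
Proof.
elim: K => [|K IH]; first by rewrite addn0 /poch big_ord0 mulr1.
by rewrite addnS factS natrM IH /poch big_ord_recr /= -addSn natrD; ring.
Qed.
End R.

Lemma pj (R : realType) (vj : R) (N e lj : nat) : (0 < lj)%N ->
  bracket (- vj) (- (N + e * lj)%N%:Z) * lj%:R ^ (- (N + e * lj)%N%:Z) =
  bracket (- vj) (- (N%:Z)) * lj%:R ^ (- (N%:Z)) *
  ((-1) ^+ (e * lj) * \prod_(sg < lj) poch ((vj - (- (N%:Z))%:~R + sg%:R) / lj%:R) e).
Proof.
move=> lp; have l0 : lj%:R != 0 :> R by rewrite pnatr_eq0 -lt0n.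
rewrite !br_neg !prodNpoch poch_split poch_mul // -!invr_expz intrN opprK.
rewrite exprD.
have -> : lj%:R ^ (N + e * lj)%N%:Z = lj%:R ^+ N * lj%:R ^+ (e * lj) :> R.
  by rewrite -exprD.
have -> : lj%:R ^ N%:Z = lj%:R ^+ N :> R by [].
have -> : ((N%:Z)%:~R : R) = N%:R by [].
field.
by rewrite !expf_neq0.
Qed.

Lemma poch_gt0 (R : realType) (x : R) e : 0 < x -> 0 < poch x e.
Proof. by move=> x0; apply: prodr_gt0 => i _; apply: ltr_wpDr. Qed.

Lemma dvd_aux (l0 : nat) m (l : 'I_m -> nat) D :
  gcdn l0 (\big[gcdn/0%N]_(j < m) l j) = 1%N -> (forall j, l0 %| D * l j)%N -> (l0 %| D)%N.
Proof.
move=> Hg Hd.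
have H1 : (l0 %| \big[gcdn/0%N]_(j < m) (D * l j))%N.
  by elim/big_ind: _ => //= x y hx hy; rewrite dvdn_gcd hx hy.
have H2 : \big[gcdn/0%N]_(j < m) (D * l j) = (D * \big[gcdn/0%N]_(j < m) l j)%N.
  by elim/big_rec2: _ => [|i y1 y2 _ ->]; rewrite ?muln0 // muln_gcdr.
by move: H1; rewrite H2 Gauss_dvdl // /coprime Hg.
Qed.

Theorem theorem4p7 (R : realType) (n m : nat)
    (a : 'I_m -> 'rV[int]_n) (a0 : 'rV[int]_n)
    (l0 : nat) (l : 'I_m -> nat)
    (Hfree : free [seq rvec R (a j) | j <- enum 'I_m])
    (Hl0 : (0 < l0)%N) (Hl : forall j, (0 < l j)%N)
    (Hgcd : gcdn l0 (\big[gcdn/0%N]_(j < m) l j) = 1%N)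
    (Hrel : a0 *+ l0 = \sum_(j < m) a j *+ l j)
    (Hsum : l0 = (\sum_(j < m) l j)%N)
    (b : 'rV[int]_n) (v : 'I_m -> R)
    (Hv : forall j, 0 <= v j < 1)
    (Hb : rvec R b = \sum_(j < m) v j *: rvec R (a j))
    (u : 'rV[int]_n)
    (Hu : exists c : 'I_m -> R, (forall j, 0 <= c j) /\
            rvec R u = \sum_(j < m) c j *: rvec R (a j))
    (Hub : exists (k0 : int) (k : 'I_m -> int),
            u - b = a0 *~ k0 + \sum_(j < m) a j *~ k j)
    (s0 : nat) (s : 'I_m -> int)
    (Hs0 : (s0 < l0)%N)
    (Hs : u + a0 *+ s0 = b - \sum_(j < m) a j *~ s j) :
  Gser a0 a l0 l v u =
  (fun k => ((\prod_(j < m) bracket (- v j) (s j)) *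
             (\prod_(j < m) (l j)%:R ^ (s j))) *
            ((- l0%:R) ^+ s0 / s0`!%:R) * Fser l0 l v s0 s k).
Proof.
have LI := @li2 R n m (fun j => rvec R (a j)) Hfree.
have l0R : l0%:R != 0 :> R by rewrite pnatr_eq0 -lt0n.
have lR : forall j, (l j)%:R != 0 :> R by move=> j; rewrite pnatr_eq0 -lt0n.
have Ha0 : rvec R a0 = \sum_(j < m) ((l j)%:R / l0%:R) *: rvec R (a j).
  have := congr1 (@rvec R n) Hrel; rewrite rvecMn rvec_sum => E.
  apply: (scalerI l0R); rewrite E scaler_sumr; apply: eq_bigr => j _.
  by rewrite rvecMn scalerA mulrCA divff // mulr1.
have Hus : rvec R u + s0%:R *: rvec R a0 = \sum_(j < m) (v j - (s j)%:~R) *: rvec R (a j).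
  have := congr1 (@rvec R n) Hs; rewrite rvecD rvecMn rvecB Hb rvec_sum => ->.
  by rewrite -sumrB; apply: eq_bigr => j _; rewrite rvecMz scalerBl.
have Hw : forall k : nat, rvec R (u + a0 *+ k) = \sum_(j < m)
     (v j - (s j)%:~R + (k%:R - s0%:R) * ((l j)%:R / l0%:R)) *: rvec R (a j).
  move=> k; rewrite rvecD rvecMn.
  have -> : rvec R u + k%:R *: rvec R a0 = (rvec R u + s0%:R *: rvec R a0) + (k%:R - s0%:R) *: rvec R a0.
    by rewrite -addrA -scalerDl addrCA subrr addr0.
  rewrite Hus Ha0 scaler_sumr -big_split /=; apply: eq_bigr => j _.
  by rewrite scalerA -scalerDl.
have Hsneg : forall j, s j <= 0.
  move=> j; case: Hu => c [c0 Ec].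
  have E2 : rvec R u + s0%:R *: rvec R a0 = \sum_(j < m) (c j + s0%:R * ((l j)%:R / l0%:R)) *: rvec R (a j).
    rewrite Ec Ha0 scaler_sumr -big_split /=; apply: eq_bigr => i _.
    by rewrite scalerA -scalerDl.
  have := LI _ _ (etrans (esym E2) Hus) j => Ej.
  have : (s j)%:~R < 1 :> R.
    have : 0 <= c j + s0%:R * ((l j)%:R / l0%:R) by apply: addr_ge0 => //; apply: mulr_ge0 => //; apply: divr_ge0.
    rewrite Ej; case/andP: (Hv j) => _ vj1 H0; lra.
  rewrite ltrz1; lia.
pose N j := `|s j|%N.
have HN : forall j, s j = - (N j)%:Z.
  by move=> j; rewrite /N lez0_abs ?opprK.
apply: funext => k; rewrite /Gser /gcoef.
case: pselect => [H | H].
  case: (cid H) => t [Ht1 Ht2] /=.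
  have Et : forall j, (k%:R - s0%:R) * ((l j)%:R / l0%:R) = (s j - t j)%:~R :> R.
    move=> j; have := LI _ _ (etrans (esym Ht2) (Hw k)) j; rewrite intrB; lra.
  have Ez : forall j, (k%:Z - s0%:Z) * (l j)%:Z = (s j - t j) * l0%:Z.
    move=> j; apply: (@intr_inj R); rewrite !intrM intrB -Et; by field.
  have Hd : (l0 %| `|k%:Z - s0%:Z|)%N.
    apply: (dvd_aux _ _ _ _ Hgcd) => j; apply/dvdnP; exists `|s j - t j|%N.
    by have := congr1 absz (Ez j); rewrite !abszM /= => ->.
  have sk : (s0 <= k)%N.
    rewrite leqNgt; apply/negP => ks.
    have : (`|k%:Z - s0%:Z| < l0)%N by lia.
    have : (0 < `|k%:Z - s0%:Z|)%N by lia.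
    move=> H1 H2; have := dvdn_leq H1 Hd; lia.
  have Hd' : (l0 %| k - s0)%N.
    by move: Hd; have -> : `|k%:Z - s0%:Z|%N = (k - s0)%N by lia.
  rewrite /Fser sk Hd' /=.
  set e := ((k - s0) %/ l0)%N.
  have Hk : k = (s0 + e * l0)%N by rewrite /e divnK // subnKC.
  clearbody e.
  have Ht : forall j, t j = - (N j + e * l j)%N%:Z.
    move=> j; have E1 : (s j - t j)%:~R = (e * l j)%:R :> R.
      by rewrite -Et Hk natrD natrM; field.
    have E2 : s j - t j = (e * l j)%N%:Z by apply: (@intr_inj R); exact E1.
    have := HN j; lia.
  rewrite (eq_bigr (fun j => bracket (- v j) (s j) * (l j)%:R ^ s j * ((-1) ^+ (e * l j) *
     \prod_(sg < l j) poch ((v j - (s j)%:~R + sg%:R) / (l j)%:R) e))); last first.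
    by move=> j _; rewrite Ht HN; apply: pj.
  rewrite !big_split /= prodrXr.
  have -> : (\sum_(j < m) (e * l j))%N = (e * l0)%N by rewrite Hsum big_distrr.
  rewrite Hk fact_split poch_mul // exprD !(exprNn (l0%:R)).
  have -> : \prod_(s1 < l0) poch ((s0.+1%:R + s1%:R) / l0%:R) e =
      \prod_(t0 < l0) poch ((s0 + t0.+1)%:R / l0%:R) e :> R.
    by apply: eq_bigr => i _; rewrite -natrD addSnnS.
  have SV : (-1) ^+ (e * l0) = ((-1) ^+ (e * l0))^-1 :> R by rewrite -exprVn invrN1.
  rewrite {1}SV.
  have nzT : \prod_(t0 < l0) poch ((s0 + t0.+1)%:R / l0%:R) e != 0 :> R.
    apply/prodf_neq0 => i _; apply: lt0r_neq0; apply: poch_gt0; apply: divr_gt0; rewrite ltr0n; lia.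
  field.
  rewrite nzT /=; apply/and3P; split.
  - by rewrite pnatr_eq0 -lt0n fact_gt0.
  - exact: expf_neq0.
  - by apply: expf_neq0; rewrite oppr_eq0 oner_eq0.
rewrite !mul0r /Fser; case: ifP; last by rewrite mulr0.
case/andP => sk Hd'; exfalso; apply: H.
set e := ((k - s0) %/ l0)%N.
have Hk : k = (s0 + e * l0)%N by rewrite /e divnK // subnKC.
clearbody e.
exists (fun j => - (N j + e * l j)%N%:Z); split => [j|]; first by lia.
rewrite (Hw k); apply: eq_bigr => j _; congr (_ *: _).
rewrite (HN j) !intrN opprK.
have -> : (((N j + e * l j)%N%:Z)%:~R : R) = (N j + e * l j)%N%:R by [].
have -> : ((N j)%:Z%:~R : R) = (N j)%:R by [].
by rewrite Hk !natrD !natrM; field.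
Qed.
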